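(* Let $(J,\mathcal F)$ and $w^S_j>0$ be as in the context, and assume $w^S_j\le w^T_j$ whenever $j\in S\subset T$ with $S,T\in\mathcal F$. Let $\mathbf c$ be $\mathcal F$-admissible and let $\mathrm{AG}_2$ on input $\mathbf c$ produce $\boldsymbol\pi$, $\boldsymbol\nu$, $S_k$, $\nu^{S_k}_j$. Then (a) for $1\le k\le n-1$, $\nu^{S_k}_j\le\nu^{S_{k+1}}_j$ for all $j\in S_{k+1}$; (b) for $1\le k<l\le n$, $$\nu_{\pi_k}=\nu^{S_k}_{\pi_k}\le\nu^{S_k}_{\pi_l}\le\nu^{S_{k+1}}_{\pi_l}\le\cdots\le\nu^{S_{l-1}}_{\pi_l}\le\nu^{S_l}_{\pi_l}=\nu_{\pi_l}.$$
   Context: $J$ finite, $|J|=n$; $\mathcal F\subseteq2^J$ with $\emptyset\in\mathcal F$, each nonempty $S\in\mathcal F$ having nonempty $\partial^-S=\{j\in S:S\setminus\{j\}\in\mathcal F\}$, each $S\in\mathcal F\ne J$ having $j\notin S$ with $S\cup\{j\}\in\mathcal F$. Coefficients $w^S_j>0$ for $j\in S\in\mathcal F$. $\mathrm{AG}_2$ on input $\mathbf c$: $S_1=J$, $\nu^{S_1}_j=c_j/w^{S_1}_j$, $\pi_1\in\arg\min\{\nu^{S_1}_j:j\in\partial^-S_1\}$, $\nu_{\pi_1}=\nu^{S_1}_{\pi_1}$; for $k=2..n$: $S_k=S_{k-1}\setminus\{\pi_{k-1}\}$, $\nu^{S_k}_j=\nu^{S_{k-1}}_j+(w^{S_{k-1}}_j/w^{S_k}_j-1)[\nu^{S_{k-1}}_j-\nu^{S_{k-1}}_{\pi_{k-1}}]$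 ($j\in S_k$), $\pi_k\in\arg\min\{\nu^{S_k}_j:j\in\partial^-S_k\}$, $\nu_{\pi_k}=\nu^{S_k}_{\pi_k}$. $\mathbf c$ is $\mathcal F$-admissible if $\nu_{\pi_1}\le\cdots\le\nu_{\pi_n}$. *)

(* Defs.v *)
From mathcomp Require Import all_boot all_order all_algebra.
Set Implicit Arguments. Unset Strict Implicit. Unset Printing Implicit Defensive.
Import Order.TTheory GRing.Theory Num.Theory.
Local Open Scope ring_scope.

(* Ground set J = 'I_n; a family F : {set {set 'I_n}}.
   Indices k of the algorithm are 0-based: step k (0 <= k < n) here is step k+1 of the paper. *)

Definition lowerbd (n : nat) (F : {set {set 'I_n}}) (S : {set 'I_n}) : {set 'I_n} :=
  [set j in S | (S :\ j) \in F].

Fixpoint AG2_S (n : nat) (pi : nat -> 'I_n) (k : nat) : {set 'I_n} :=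
  match k with
  | 0 => setT
  | k'.+1 => AG2_S pi k' :\ pi k'
  end.

Fixpoint AG2_nu (R : realFieldType) (n : nat) (w : {set 'I_n} -> 'I_n -> R)
    (c : 'I_n -> R) (pi : nat -> 'I_n) (k : nat) (j : 'I_n) : R :=
  match k with
  | 0 => c j / w setT j
  | k'.+1 =>
      AG2_nu w c pi k' j
      + (w (AG2_S pi k') j / w (AG2_S pi k'.+1) j - 1)
        * (AG2_nu w c pi k' j - AG2_nu w c pi k' (pi k'))
  end.

Definition is_AG2_run (R : realFieldType) (n : nat) (F : {set {set 'I_n}})
    (w : {set 'I_n} -> 'I_n -> R) (c : 'I_n -> R) (pi : nat -> 'I_n) : Prop :=
  forall k, (k < n)%N ->
    pi k \in lowerbd F (AG2_S pi k) /\
    (forall j, j \in lowerbd F (AG2_S pi k) -> AG2_nu w c pi k (pi k) <= AG2_nu w c pi k j).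

Definition AG2_val (R : realFieldType) (n : nat) (w : {set 'I_n} -> 'I_n -> R)
    (c : 'I_n -> R) (pi : nat -> 'I_n) (k : nat) : R := AG2_nu w c pi k (pi k).

Definition AG2_admissible (R : realFieldType) (n : nat)
    (w : {set 'I_n} -> 'I_n -> R) (c : 'I_n -> R) (pi : nat -> 'I_n) : Prop :=
  forall k, (k.+1 < n)%N -> AG2_val w c pi k <= AG2_val w c pi k.+1.

(* Main.v *)
Require Import Defs.
From mathcomp Require Import all_boot all_order all_algebra.
From mathcomp Require Import lra zify.
Import Order.TTheory GRing.Theory Num.Theory.
Local Open Scope ring_scope.

Lemma setT_inF (n : nat) (F : {set {set 'I_n}})
    (HF0 : set0 \in F)
    (HFup : forall S, S \in F -> S != setT -> exists2 j, j \notin S & (j |: S) \in F) :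
  setT \in F.
Proof.
suff H : forall d S, S \in F -> (n - #|S| <= d)%N -> setT \in F.
  exact: (H n set0 HF0 (leq_subr _ _)).
elim=> [|d IH] S SF Hd.
  suff E : S = setT by rewrite -E.
  apply/eqP; rewrite eqEcard subsetT cardsT card_ord /=; by move: Hd; rewrite leqn0 subn_eq0.
have [E|nT] := eqVneq S setT; first by rewrite -E.
have [j jS jSF] := HFup S SF nT.
apply: (IH _ jSF); rewrite cardsU1 jS /=; move: Hd; rewrite subnS; rewrite -subn1; move=> H; rewrite leq_subLR; exact: H.
Qed.

Lemma S_sub (n : nat) (pi : nat -> 'I_n) m l :
  (m <= l)%N -> AG2_S pi l \subset AG2_S pi m.
Proof.
elim: l => [|l IH]; first by rewrite leqn0 => /eqP ->.
rewrite leq_eqVlt => /orP [/eqP ->|Hm]; first by [].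
apply: subset_trans (IH Hm); exact: subD1set.
Qed.

Lemma S_card (n : nat) (pi : nat -> 'I_n)
  (Hpi : forall k, (k < n)%N -> pi k \in AG2_S pi k) k :
  (k <= n)%N -> #|AG2_S pi k| = (n - k)%N.
Proof.
elim: k => [|k IH] Hk /=; first by rewrite cardsT card_ord subn0.
have := cardsD1 (pi k) (AG2_S pi k).
rewrite Hpi // IH; last by lia.
by move=> E; rewrite subnS E.
Qed.

Lemma S_cover (n : nat) (pi : nat -> 'I_n)
  (Hpi : forall k, (k < n)%N -> pi k \in AG2_S pi k) :
  forall d m j, (n - m <= d)%N -> (m <= n)%N -> j \in AG2_S pi m ->
  exists l, [/\ (m <= l)%N, (l < n)%N & j = pi l].
Proof.
elim=> [|d IH] m j Hd Hmn Hj.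
  have Hm : m = n by lia.
  have := @S_card n pi Hpi m Hmn; rewrite Hm subnn => /eqP.
  rewrite cards_eq0 => /eqP E; move: Hj; rewrite Hm E inE //.
have [Hm|Hm] := leqP n m.
  have Hm' : m = n by lia.
  have := @S_card n pi Hpi m Hmn; rewrite Hm' subnn => /eqP.
  rewrite cards_eq0 => /eqP E; move: Hj; rewrite Hm' E inE //.
have [->|jne] := eqVneq j (pi m); first by exists m.
have Hj' : j \in AG2_S pi m.+1 by rewrite /= !inE jne Hj.
have [l [H1 H2 H3]] := IH m.+1 j ltac:(lia) Hm Hj'.
exists l; split=> //; lia.
Qed.

Theorem lemma4 (R : realFieldType) (n : nat) (F : {set {set 'I_n}})
    (w : {set 'I_n} -> 'I_n -> R) (c : 'I_n -> R) (pi : nat -> 'I_n)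
    (HF0 : set0 \in F)
    (HFdown : forall S, S \in F -> S != set0 -> lowerbd F S != set0)
    (HFup : forall S, S \in F -> S != setT -> exists2 j, j \notin S & (j |: S) \in F)
    (Hwpos : forall S j, S \in F -> j \in S -> 0 < w S j)
    (Hwmono : forall S T j, S \in F -> T \in F -> S \subset T -> j \in S -> w S j <= w T j)
    (Hrun : is_AG2_run F w c pi)
    (Hadm : AG2_admissible w c pi) :
  (* (a) *)
  (forall k j, (k.+1 < n)%N -> j \in AG2_S pi k.+1 ->
     AG2_nu w c pi k j <= AG2_nu w c pi k.+1 j) /\
  (* (b) *)
  (forall k l, (k < l)%N -> (l < n)%N ->
     AG2_val w c pi k = AG2_nu w c pi k (pi k) /\
     AG2_nu w c pi k (pi k) <= AG2_nu w c pi k (pi l) /\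
     (forall m, (k <= m)%N -> (m < l)%N ->
        AG2_nu w c pi m (pi l) <= AG2_nu w c pi m.+1 (pi l)) /\
     AG2_nu w c pi l (pi l) = AG2_val w c pi l).
Proof.
have Hpi : forall k, (k < n)%N -> pi k \in AG2_S pi k.
  by move=> k Hk; have [] := Hrun k Hk; rewrite inE => /andP [].
have SF : forall m, (m <= n)%N -> AG2_S pi m \in F.
  case=> [|m] Hm; first exact: setT_inF.
  by have [] := Hrun m Hm; rewrite inE => /andP [].
have Hr : forall m j, (m < n)%N -> j \in AG2_S pi m.+1 ->
    0 <= w (AG2_S pi m) j / w (AG2_S pi m.+1) j - 1.
  move=> m j Hm Hj.
  have wp := Hwpos _ _ (SF m.+1 Hm) Hj.
  have wm := Hwmono _ _ j (SF m.+1 Hm) (SF m (ltnW Hm)) (subD1set _ _) Hj.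
  by rewrite subr_ge0 ler_pdivlMr // mul1r.
have HL : forall k l, (k <= l)%N -> (l < n)%N ->
    AG2_nu w c pi k (pi k) <= AG2_nu w c pi k (pi l).
  move=> k l Hkl Hl; rewrite leNgt; apply/negP => H.
  suff Hd : forall m, (k <= m)%N -> (m <= l)%N ->
      AG2_nu w c pi m (pi l) < AG2_nu w c pi m (pi m).
    by move: (Hd l Hkl (leqnn _)); rewrite ltxx.
  elim=> [|m IH] Hkm Hml.
    by move: Hkm; rewrite leqn0 => /eqP E; rewrite -E.
  have [E|Hkm'] := eqVneq k m.+1; first by rewrite -E.
  have IH' := IH ltac:(lia) ltac:(lia).
  rewrite /=.
  have Hin : pi l \in AG2_S pi m.+1.
    exact: (subsetP (@S_sub _ pi _ _ Hml)) _ (Hpi l Hl).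
  have r0 := Hr m (pi l) ltac:(lia) Hin.
  have Hp : (w (AG2_S pi m) (pi l) / w (AG2_S pi m.+1) (pi l) - 1) *
      (AG2_nu w c pi m (pi l) - AG2_nu w c pi m (pi m)) <= 0.
    apply: (mulr_ge0_le0 r0); rewrite subr_le0; exact: ltW.
  have Ha := Hadm m ltac:(lia).
  rewrite /AG2_val /= in Ha.
  move: Hp Ha IH'.
  set p := (_ * _); set a := AG2_nu _ _ _ _ (pi l); set b := AG2_nu _ _ _ _ (pi m).
  move=> *; lra.
split.
  move=> k j Hk Hj.
  have [l [H1 H2 E]] := @S_cover n pi Hpi (n - k.+1) k.+1 j (leqnn _) (ltnW Hk) Hj.
  rewrite /= -[X in X <= _]addr0 lerD2l.
  apply: mulr_ge0; first exact: Hr (ltnW Hk) Hj.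
  by rewrite subr_ge0 E; apply: HL => //; lia.
move=> k l Hkl Hl; split=> //; split; first by apply: HL => //; lia.
split=> // m Hkm Hml.
rewrite /= -[X in X <= _]addr0 lerD2l.
have Hin : pi l \in AG2_S pi m.+1 by exact: (subsetP (@S_sub _ pi _ _ Hml)) _ (Hpi l Hl).
apply: mulr_ge0; first exact: Hr m _ ltac:(lia) Hin.
by rewrite subr_ge0; apply: HL => //; lia.
Qed.
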